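(* Let $H$ be a graph and $G=H\odot K_1$. Then: (1) $G$ is $A$-AW for every integer $\ell\ge 2$; (2) if $G$ has $m$ edges and $n$ vertices, then $T_{V(G)}^{A(G)}(1)=\{2(m-n)\}$; (3) if $G$ is a forest with $c$ connected components, then $T_{V(G)}^{A(G)}(1)=\{-2c\}$.
   Context: All graphs are finite and simple. For a graph $H$, $H\odot K_1$ is the graph obtained from $H$ by adding, for each vertex $u$ of $H$, a new vertex adjacent only to $u$. Fix $\ell\ge 2$; labelings are maps $V(G)\to\mathbb{Z}_\ell$. In the adjacency Lights Out game, toggling a vertex $w$ adds $1$ (mod $\ell$) to the label of each vertex of the open neighborhood $N(w)$; the game is won when all labels are $0$; $G$ is $A$-AW if every labeling is winnable. For $U\subseteq V(G)$ and $r\in\mathbb{Z}_\ell$, $T_U^{A(G)}(r)\subseteq\mathbb{Z}_\ell$ is the set of all $t$ such that the adjacency game on $G$ starting from the labeling that is $r$ on $U$ and $0$ elsewhere can be won with the vertices of $U$ toggled a total of $t$ times (mod $\ell$). *)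

(* Defs.v *)
From HB Require Import structures.
From mathcomp Require Import all_boot all_order all_algebra.
Set Implicit Arguments. Unset Strict Implicit. Unset Printing Implicit Defensive.
Import GRing.Theory.
Local Open Scope ring_scope.

(* A finite simple graph is (T : finType, e : rel T) with e symmetric and irreflexive. *)

(* Corona H ⊙ K1: vertices inl u (original) and inr u (new pendant vertex attached to u). *)
Definition corona (T : finType) (e : rel T) : rel (T + T) :=
  fun a b => match a, b with
  | inl u, inl v => e u v
  | inl u, inr v => u == v
  | inr u, inl v => u == v
  | inr _, inr _ => false
  end.

(* Toggling w adds 1 to every vertex of N(w); x w = number of toggles of w (mod l).
   Vertex v ends with label  lab v + sum_{w : v in N(w)} x w. *)
Definition winnable (T : finType) (e : rel T) (l : nat) (lab : T -> 'Z_l) : Prop :=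
  exists x : T -> 'Z_l, forall v, lab v + \sum_(w | e w v) x w = 0.

Definition A_AW (T : finType) (e : rel T) (l : nat) : Prop :=
  forall lab : T -> 'Z_l, winnable e lab.

Definition Tset (T : finType) (e : rel T) (l : nat) (U : {set T}) (r : 'Z_l)
  : {set 'Z_l} :=
  [set t : 'Z_l | [exists x : {ffun T -> 'Z_l},
     [forall v, (if v \in U then r else 0) + \sum_(w | e w v) x w == 0]
     && (\sum_(u in U) x u == t)]].

Definition nedges (T : finType) (e : rel T) : nat :=
  #|[set [set p.1; p.2] | p in [set p : T * T | e p.1 p.2]]|.

Definition forest (T : finType) (e : rel T) : Prop :=
  ~ exists s : seq T, [/\ uniq s, 3 <= size s & cycle e s]%N.

Definition ncomp (T : finType) (e : rel T) : nat :=
  #|[set [set y | connect e x y] | x : T]|.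

(* Main.v *)
Require Import Defs.
From HB Require Import structures.
From mathcomp Require Import all_boot all_order all_algebra.
Set Implicit Arguments. Unset Strict Implicit. Unset Printing Implicit Defensive.

Section G.
Variable T : finType.
Implicit Types (e r : rel T).

Lemma set2_eq (a b c d : T) : a != b -> [set c; d] = [set a; b] ->
  (c == a) && (d == b) || (c == b) && (d == a).
Proof.
move=> nab E.
have ca : c \in [set a; b] by rewrite -E !inE eqxx.
have cd : d \in [set a; b] by rewrite -E !inE eqxx orbT.
have ac : a \in [set c; d] by rewrite E !inE eqxx.
have bc : b \in [set c; d] by rewrite E !inE eqxx orbT.
move: ca cd ac bc; rewrite !inE.
case/orP=> /eqP ->; case/orP=> /eqP ->; rewrite ?eqxx //=; try (by rewrite orbT).
all: rewrite ?(eq_sym b a); by case: (a == b) nab.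
Qed.

Lemma handshake e : symmetric e -> irreflexive e ->
  (2 * nedges e)%N = #|[set p : T * T | e p.1 p.2]|.
Proof.
move=> esym eirr.
rewrite /nedges -[RHS]sum1_card (partition_big_imset (fun p : T * T => [set p.1; p.2])).
rewrite /= mulnC -sum_nat_const; apply: eq_bigr => S /imsetP [[a b]].
rewrite inE /= => eab ->.
have nab : a != b by apply: contraTneq eab => ->; rewrite eirr.
rewrite sum1dep_card.
have -> : [set x in [set p | e p.1 p.2] | [set x.1; x.2] == [set a; b]] = [set (a, b); (b, a)].
  apply/setP => -[c d]; rewrite !inE /=.
  apply/idP/idP.
    by case/andP=> _ /eqP /(set2_eq nab) /orP [] /andP [/eqP -> /eqP ->]; rewrite eqxx ?orbT.
  by case/orP=> /eqP [-> ->] /=; rewrite ?eab ?(esym b a) ?eab ?eqxx // setUC eqxx.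
rewrite cards2; case: eqP => // -[ab _]; by rewrite ab eqxx in nab.
Qed.

Lemma nedges0 e : nedges e = 0%N -> forall x y, e x y = false.
Proof.
move=> /eqP; rewrite cards_eq0 => /eqP E x y; apply/negP => exy.
have : [set x; y] \in set0 by rewrite -E; apply/imsetP; exists (x, y); rewrite ?inE.
by rewrite inE.
Qed.

Lemma ncomp_empty e : (forall x y, e x y = false) -> ncomp e = #|T|.
Proof.
move=> e0; rewrite /ncomp (@eq_imset _ _ _ (@set1 T)) ?card_imset //; first exact: set1_inj.
move=> x; apply/setP => y; rewrite !inE.
apply/idP/idP; last by move/eqP->; apply: connect0.
by case/connectP=> -[|z p] /=; [move=> _ ->|rewrite e0].
Qed.

Lemma ncomp_eq e e' : e =2 e' -> ncomp e = ncomp e'.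
Proof.
move=> E; rewrite /ncomp (@eq_imset _ _ _ (fun x => [set y | connect e' x y])) //.
move=> x; apply/setP => y.
by rewrite !inE (eq_connect E).
Qed.

Section AddEdge.
Variables (r : rel T) (a b : T).
Hypothesis rsym : symmetric r.
Hypothesis nab : ~~ connect r a b.
Let r1 : rel T := fun x y => r x y || ((x == a) && (y == b) || (x == b) && (y == a)).
Let csym : connect_sym r := sym_connect_sym rsym.
Let R x y := connect r x y || (connect r x a || connect r x b) && (connect r y a || connect r y b).

Lemma conn1 x y : connect r1 x y = R x y.
Proof.
apply/idP/idP.
  case/connectP=> p; elim: p x => [|z p IH] x /=.
    by move=> _ ->; rewrite /R connect0.
  case/andP=> rxz pz ey; have := IH z pz ey; rewrite /R.
  case/orP: rxz => [rxz|/orP [] /andP [/eqP -> /eqP ->]].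
    by rewrite !(same_connect csym (connect1 rxz)).
  - rewrite !connect0 !orbT /= => /orP [cby|->]; rewrite ?orbT //.
    by rewrite (csym y b) cby !orbT.
  - rewrite !connect0 !orbT /= => /orP [cay|->]; rewrite ?orbT //.
    by rewrite (csym y a) cay !orbT.
have sub : subrel (connect r) (connect r1).
  by apply: connect_sub => u v ruv; apply: connect1; rewrite /r1 ruv.
have r1ab : connect r1 a b by apply: connect1; rewrite /r1 !eqxx orbT.
have r1ba : connect r1 b a by apply: connect1; rewrite /r1 !eqxx !orbT.
rewrite /R; case/orP=> [/sub //|/andP [hx hy]].
have c1sym : connect_sym r1.
  apply: sym_connect_sym => u v; rewrite /r1 rsym; congr (_ || _).
  by rewrite orbC; congr (_ || _); rewrite andbC.
case/orP: hx => /sub hx; case/orP: hy => /sub hy; rewrite c1sym in hy.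
- exact: connect_trans hx hy.
- exact: connect_trans hx (connect_trans r1ab hy).
- exact: connect_trans hx (connect_trans r1ba hy).
- exact: connect_trans hx hy.
Qed.

Lemma add_edge : (ncomp r1 + 1)%N = ncomp r.
Proof.
set C := fun x => [set y | connect r x y].
set U := C a :|: C b.
set Q := [set x | ~~ (connect r x a || connect r x b)].
set K' := [set C x | x in Q].
have CE x y : connect r x y -> C x = C y.
  by move=> cxy; apply/setP => z; rewrite !inE (same_connect csym cxy).
have Kr : [set C x | x : T] = C a |: (C b |: K').
  apply/setP => S; apply/imsetP/idP.
    case=> x _ ->; rewrite !inE.
    case: (boolP (connect r x a)) => [/CE ->|xa]; first by rewrite eqxx.
    case: (boolP (connect r x b)) => [/CE ->|xb]; first by rewrite eqxx orbT.
    by apply/orP; right; apply/orP; right; apply/imsetP; exists x; rewrite // inE negb_or xa xb.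
  rewrite !inE => /orP [/eqP ->|/orP [/eqP ->|/imsetP [x _ ->]]]; by eexists.
have K1 : [set [set y | connect r1 x y] | x : T] = U |: K'.
  apply/setP => S; apply/imsetP/idP.
    case=> x _ ->; rewrite !inE.
    case: (boolP (connect r x a || connect r x b)) => hx.
      apply/orP; left; apply/eqP/setP => y; rewrite !inE conn1 /R hx /=.
      rewrite (csym y a) (csym y b).
      case/orP: hx => hx.
        by rewrite (same_connect csym hx); case: (connect r a y).
      by rewrite (same_connect csym hx); case: (connect r a y); case: (connect r b y).
    apply/orP; right; apply/imsetP; exists x; first by rewrite inE.
    apply/setP => y; rewrite !inE conn1 /R (negbTE hx). by rewrite orbF.
  rewrite !inE => /orP [/eqP ->|/imsetP [x xQ ->]].
    exists a => //; apply/setP => y; rewrite !inE conn1 /R connect0 /=.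
    by rewrite (csym y a) (csym y b); case: (connect r a y).
  exists x => //; apply/setP => y; rewrite !inE conn1 /R.
  by move: xQ; rewrite inE => /negbTE ->; rewrite orbF.
have notK S : S \in K' -> (a \in S) || (b \in S) -> False.
  case/imsetP=> x; rewrite inE => hx -> /orP []; rewrite inE => h.
    by rewrite h in hx.
  by rewrite h orbT in hx.
rewrite /ncomp K1 Kr !cardsU1.
have -> : U \notin K' by apply/negP => /notK; apply; rewrite !inE connect0.
have -> : C b \notin K' by apply/negP => /notK; apply; rewrite !inE connect0 orbT.
have -> : C a \notin C b |: K'.
  rewrite !inE negb_or; apply/andP; split.
    by apply/negP => /eqP /setP /(_ b); rewrite !inE connect0 (negbTE nab).
  by apply/negP => /notK; apply; rewrite !inE connect0.
by rewrite addnC.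
Qed.
End AddEdge.

Lemma forest_sub e e' : subrel e' e -> forest e -> forest e'.
Proof.
move=> sub fe [s [us ss cs]]; apply: fe; exists s; split=> //.
exact: sub_cycle cs.
Qed.

Lemma forest_count n e : nedges e = n -> symmetric e -> irreflexive e ->
  forest e -> (nedges e + ncomp e)%N = #|T|.
Proof.
elim: n e => [|n IH] e ne esym eirr fe.
  by rewrite ne ncomp_empty //; apply: nedges0.
have : [set [set p.1; p.2] | p in [set p : T * T | e p.1 p.2]] != set0.
  by rewrite -card_gt0; rewrite /nedges in ne; rewrite ne.
case/set0Pn=> S /imsetP [[a b]]; rewrite inE /= => eab defS.
have nab : a != b by apply: contraTneq eab => ->; rewrite eirr.
pose ab x y := (x == a) && (y == b) || (x == b) && (y == a).
pose e0 : rel T := fun x y => e x y && ~~ ab x y.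
have e0sub : subrel e0 e by move=> x y /andP [].
have e0sym : symmetric e0.
  move=> x y; rewrite /e0 /ab esym; congr (_ && ~~ _).
  by rewrite orbC; congr (_ || _); rewrite andbC.
have e0irr : irreflexive e0 by move=> x; rewrite /e0 eirr.
have fe0 : forest e0 by apply: forest_sub fe.
have E0 : [set [set p.1; p.2] | p in [set p : T * T | e0 p.1 p.2]] =
          [set [set p.1; p.2] | p in [set p : T * T | e p.1 p.2]] :\ S.
  apply/setP => X; rewrite !inE; apply/imsetP/andP.
    case=> -[c d]; rewrite inE /= => /andP [ecd nabcd] ->; split.
      by apply: contra nabcd; rewrite defS /ab => /eqP /(set2_eq nab).
    by apply/imsetP; exists (c, d); rewrite ?inE.
  case=> nXS /imsetP [[c d]]; rewrite inE /= => ecd defX.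
  exists (c, d) => //; rewrite inE /= /e0 ecd /=.
  rewrite /ab; apply: contra nXS => /orP [] /andP [/eqP cE /eqP dE]; rewrite defX defS cE dE ?eqxx // setUC eqxx //.
have ne0 : nedges e0 = n.
  by rewrite /nedges E0; rewrite /nedges (cardsD1 S) in ne; rewrite defS in ne *;
     move: ne; rewrite (_ : [set a; b] \in _) //; [case|apply/imsetP; exists (a, b); rewrite ?inE].
have IH0 := IH e0 ne0 e0sym e0irr fe0.
have nc : ~~ connect e0 a b.
  apply/negP => /connectP [p pp lp].
  case/shortenP: pp lp => p' pp' up' _ lp'.
  case: p' pp' up' lp' => [|c [|d q]] /=.
  - by move=> _ _ ab'; rewrite ab' eqxx in nab.
  - by rewrite andbT => + _ bc; rewrite -bc /e0 /ab !eqxx /= andbF.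
  move=> pp' up' lp'; apply: fe; exists [:: a, c, d & q]; split=> //.
  rewrite /cycle rcons_path; apply/andP; split.
    by apply: (@sub_path _ e0).
  have -> : last a [:: c, d & q] = b by rewrite lp'.
  by rewrite esym.
have Ee : e =2 (fun x y => e0 x y || ((x == a) && (y == b) || (x == b) && (y == a))).
  move=> x y; rewrite /e0 -/(ab x y); case abxy: (ab x y); rewrite ?andbT ?orbT ?orbF //.
  by case/orP: abxy => /andP [/eqP -> /eqP ->]; rewrite // esym.
rewrite (ncomp_eq Ee) ne -IH0 ne0 -(add_edge e0sym nc).
by rewrite addnA addn1 addSn.
Qed.
End G.

Section Main.
Variables (V : finType) (h : rel V).
Hypothesis h_sym : symmetric h.
Hypothesis h_irr : irreflexive h.

Definition deg (u : V) : nat := (\sum_(w | h w u) 1)%N.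

Lemma corona_sym : symmetric (corona h).
Proof. by case=> x [] y //=; rewrite 1?h_sym // eq_sym. Qed.

Lemma corona_irr : irreflexive (corona h).
Proof. by case=> x /=; rewrite ?h_irr. Qed.

Lemma hs_corona : (2 * nedges (corona h))%N = (\sum_u deg u + 2 * #|V|)%N.
Proof.
rewrite (handshake corona_sym corona_irr) -sum1_card.
rewrite (eq_bigl (fun p : (V + V) * (V + V) => true && corona h p.1 p.2)); last first.
  by move=> p; rewrite inE.
rewrite -(pair_big_dep xpredT (corona h) (fun _ _ => 1%N)) /=.
rewrite big_sumType /=.
rewrite (eq_bigr (fun u => deg u + 1)%N); last first.
  move=> u _; rewrite big_sumType /=; congr (_ + _)%N.
    by apply: eq_bigl => w; rewrite h_sym.
  rewrite (eq_bigl (fun w => w == u)) ?big_pred1_eq // => w; by rewrite eq_sym.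
rewrite [X in (_ + X)%N](eq_bigr (fun u => 1%N)); last first.
  move=> u _; rewrite big_sumType /= [X in (_ + X)%N]big_pred0 // addn0.
  rewrite (eq_bigl (fun w => w == u)) ?big_pred1_eq // => w; by rewrite eq_sym.
rewrite big_split /= -addnA; congr (_ + _)%N.
have S1 : (\sum_(u : V) 1 = #|V|)%N by rewrite cardE -sum1_size big_enum.
by rewrite S1 mul2n -addnn.
Qed.

End Main.

From mathcomp Require Import zify.
Import GRing.Theory.
Local Open Scope ring_scope.

Section LO.
Variables (V : finType) (h : rel V).
Hypothesis h_sym : symmetric h.
Hypothesis h_irr : irreflexive h.
Variable R : pzRingType.

Lemma sum_corona_inl (x : V + V -> R) u :
  \sum_(w | corona h w (inl u)) x w = \sum_(w | h w u) x (inl w) + x (inr u).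
Proof. by rewrite big_sumType /= big_pred1_eq. Qed.

Lemma sum_corona_inr (x : V + V -> R) u :
  \sum_(w | corona h w (inr u)) x w = x (inl u).
Proof. by rewrite big_sumType /= big_pred1_eq [X in _ + X]big_pred0 // addr0. Qed.

Definition x0 (lab : V + V -> R) (v : V + V) : R :=
  match v with
  | inl u => - lab (inr u)
  | inr u => - lab (inl u) + \sum_(w | h w u) lab (inr w)
  end.

Lemma x0_sol lab v : lab v + \sum_(w | corona h w v) x0 lab w = 0.
Proof.
case: v => u.
  by rewrite sum_corona_inl /= sumrN addrCA addNKr addNr.
by rewrite sum_corona_inr /= subrr.
Qed.

Lemma S1R : \sum_(u : V) (1 : R) = (#|V|)%:R.
Proof.
have S1 : (\sum_(u : V) 1 = #|V|)%N by rewrite cardE -sum1_size big_enum.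
by rewrite -S1 natr_sum.
Qed.

Lemma sol_sum (x : V + V -> R) :
  (forall v, 1 + \sum_(w | corona h w v) x w = 0) ->
  \sum_v x v = (\sum_u deg h u)%:R - (2 * #|V|)%:R.
Proof.
move=> H.
have xl u : x (inl u) = -1.
  have := H (inr u); rewrite sum_corona_inr => /eqP; rewrite addrC addr_eq0 => /eqP //.
have xr u : x (inr u) = (deg h u)%:R - 1.
  have := H (inl u); rewrite sum_corona_inl (eq_bigr (fun _ => -1)); last by move=> w _; rewrite xl.
  rewrite sumrN /deg natr_sum addrA => /eqP; rewrite addrC addr_eq0 => /eqP ->.
  by rewrite opprB.
rewrite big_sumType (eq_bigr (fun _ => -1)); last by move=> u _; rewrite xl.
rewrite [X in _ + X = _](eq_bigr (fun u => (deg h u)%:R - 1)); last by move=> u _; rewrite xr.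
rewrite sumrN sumrB S1R natr_sum mul2n -addnn natrD opprD.
by rewrite addrCA addrA.
Qed.
End LO.

Lemma sumsetT (T : finType) (R : nmodType) (F : T -> R) :
  \sum_(u in [set: T]) F u = \sum_u F u.
Proof. by apply: eq_bigl => v; rewrite inE. Qed.

Unset Implicit Arguments.
Set Strict Implicit.
Set Printing Implicit Defensive.

Theorem lemma3p9 (V : finType) (h : rel V) (h_sym : symmetric h)
    (h_irr : irreflexive h) :
  (forall l : nat, (1 < l)%N -> A_AW (corona h) l) /\
  (forall l : nat, (1 < l)%N ->
     Tset (corona h) [set: (V + V)%type] (1 : 'Z_l) =
     [set ((2 * ((nedges (corona h))%:Z - (#|{: (V + V)%type}|)%:Z))%:~R : 'Z_l)]) /\
  (forall l : nat, (1 < l)%N -> forest (corona h) ->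
     Tset (corona h) [set: (V + V)%type] (1 : 'Z_l) =
     [set ((- (2 * (ncomp (corona h))%:Z))%:~R : 'Z_l)]).
Proof.
have T2 : forall l : nat, Tset (corona h) [set: (V + V)%type] (1 : 'Z_l) =
    [set ((\sum_u deg h u)%:R - (2 * #|V|)%:R : 'Z_l)].
  move=> l; apply/setP => t; rewrite !inE; apply/existsP/eqP.
    case=> x /andP [/forallP Hx /eqP <-].
    rewrite sumsetT.
    by apply: sol_sum => v; move: (eqP (Hx v)); rewrite inE.
  move=> ->; exists [ffun v => x0 h (fun _ => (1 : 'Z_l)) v]; apply/andP; split.
    apply/forallP => v; rewrite ?inE; apply/eqP.
    under eq_bigr do rewrite ffunE.
    exact: x0_sol.
  rewrite sumsetT (eq_bigr (fun u => x0 h (fun _ => (1 : 'Z_l)) u)); last by move=> u _; rewrite ffunE.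
  apply/eqP; rewrite (@sol_sum V h _ (x0 h (fun _ => (1 : 'Z_l)))) // => v.
  exact: x0_sol.
have hs := hs_corona h_sym h_irr.
have cs : #|{: (V + V)%type}| = (#|V| + #|V|)%N by rewrite card_sum.
split; [|split].
- move=> l _ lab; exists (x0 h lab) => v; exact: x0_sol.
- move=> l _; rewrite T2; congr [set _].
  have -> : (2 * ((nedges (corona h))%:Z - (#|{: (V + V)%type}|)%:Z) =
             (\sum_u deg h u)%N%:Z - (2 * #|V|)%N%:Z)%R by rewrite cs; lia.
  by rewrite intrB.
- move=> l _ fo; rewrite T2; congr [set _].
  have fc := forest_count (erefl _) (corona_sym h_sym) (corona_irr h_irr) fo.
  have -> : (- (2 * (ncomp (corona h))%:Z) =
             (\sum_u deg h u)%N%:Z - (2 * #|V|)%N%:Z)%R by rewrite cs in fc; lia.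
  by rewrite intrB.
Qed.
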